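(* Let $(\mathfrak g,[\cdot,\cdot],\alpha,\varepsilon)$ be a color Hom-Lie algebra and $\rho$ a representation of $\mathfrak g$ on $(M,\beta)$. Let $M^*$ be the (graded) dual of $M$, $\tilde\beta:M^*\to M^*$, $\tilde\beta(f)=f\circ\beta$, and $\tilde\rho:\mathfrak g\to\mathrm{End}(M^* )$, $\tilde\rho(x)(f)=-\varepsilon(x,f)\,f\circ\rho(x)$ for homogeneous $x,f$. Then $\tilde\rho$ is a representation of $\mathfrak g$ on $(M^*,\tilde\beta)$ if and only if $\rho(x)\circ\rho(\alpha(y))-\varepsilon(x,y)\rho(y)\circ\rho(\alpha(x))=\beta\circ\rho([x,y])$ for all homogeneous $x,y\in\mathfrak g$.
   Context: $\mathbb K$ is a field of characteristic zero and $\Gamma$ an abelian group. A bicharacter is a map $\varepsilon:\Gamma\times\Gamma\to\mathbb K\setminus\{0\}$ with $\varepsilon(a,b)\varepsilon(b,a)=1$, $\varepsilon(a,b+c)=\varepsilon(a,b)\varepsilon(a,c)$, $\varepsilon(a+b,c)=\varepsilon(a,c)\varepsilon(b,c)$; for homogeneous elements $\varepsilon(x,y)=\varepsilon(\deg x,\deg y)$. A color Hom-Lie algebra $(\mathfrak g,[\cdot,\cdot],\alpha,\varepsilon)$: $\Gamma$-graded space, even bilinear bracket, even linear $\alpha$, with $[x,y]=-\varepsilon(x,y)[y,x]$ and $\varepsilon(z,x)[\alpha(x),[y,z]]+\varepsilon(x,y)[\alpha(y),[z,x]]+\varepsilon(y,z)[\alpha(z),[x,y]]=0$. For a $\Gamma$-graded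 space $M$ and even linear $\beta:M\to M$, a representation of $\mathfrak g$ on $(M,\beta)$ is an even linear map $\rho:\mathfrak g\to\mathfrak{gl}(M)$ with $\rho([x,y])\circ\beta=\rho(\alpha(x))\circ\rho(y)-\varepsilon(x,y)\rho(\alpha(y))\circ\rho(x)$ for homogeneous $x,y$. The graded dual $M^*$ has as degree-$\gamma$ elements the linear forms $f$ with $f(M_\delta)=0$ unless $\gamma+\delta=0$. *)

(* Defs.v *)
From HB Require Import structures.
From mathcomp Require Import all_boot all_order all_algebra.
Set Implicit Arguments. Unset Strict Implicit. Unset Printing Implicit Defensive.
Import Order.TTheory GRing.Theory Num.Theory.
Local Open Scope ring_scope.

Definition bicharacter (K : fieldType) (G : zmodType) (eps : G -> G -> K) : Prop :=
  [/\ forall a b, eps a b != 0,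
      forall a b, eps a b * eps b a = 1,
      forall a b c, eps a (b + c) = eps a b * eps a c
    & forall a b c, eps (a + b) c = eps a c * eps b c].

Definition graded (K : fieldType) (G : zmodType) (V : lmodType K)
    (D : G -> pred V) : Prop :=
  [/\ forall g, 0 \in D g,
      forall g (k : K) u v, u \in D g -> v \in D g -> k *: u + v \in D g,
      forall v : V, exists (s : seq G) (c : G -> V),
          uniq s /\ (forall g, c g \in D g) /\ v = \sum_(g <- s) c g
    &
      forall (s : seq G) (c : G -> V), uniq s -> (forall g, c g \in D g) ->
          \sum_(g <- s) c g = 0 -> forall g, g \in s -> c g = 0].

Definition lin (K : fieldType) (U V : lmodType K) (f : U -> V) : Prop :=
  forall (k : K) u v, f (k *: u + v) = k *: f u + f v.

Definition linform (K : fieldType) (U : lmodType K) (f : U -> K) : Prop :=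
  forall (k : K) u v, f (k *: u + v) = k * f u + f v.

Definition even_map (K : fieldType) (G : zmodType) (U V : lmodType K)
    (DU : G -> pred U) (DV : G -> pred V) (f : U -> V) : Prop :=
  lin f /\ forall g u, u \in DU g -> f u \in DV g.

Definition color_hom_lie (K : fieldType) (G : zmodType) (g : lmodType K)
    (Dg : G -> pred g) (br : g -> g -> g) (al : g -> g) (eps : G -> G -> K) : Prop :=
  [/\ graded Dg /\ bicharacter eps,
      (forall x, lin (br x)) /\ (forall y, lin (br^~ y)) /\
        (forall a b x y, x \in Dg a -> y \in Dg b -> br x y \in Dg (a + b)),
      even_map Dg Dg al,
      (forall a b x y, x \in Dg a -> y \in Dg b -> br x y = - (eps a b *: br y x))
    &
      (forall a b c x y z, x \in Dg a -> y \in Dg b -> z \in Dg c ->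
         eps c a *: br (al x) (br y z) + eps a b *: br (al y) (br z x)
           + eps b c *: br (al z) (br x y) = 0)].

Definition is_representation (K : fieldType) (G : zmodType) (g M : lmodType K)
    (Dg : G -> pred g) (br : g -> g -> g) (al : g -> g) (eps : G -> G -> K)
    (DM : G -> pred M) (beta : M -> M) (rho : g -> M -> M) : Prop :=
  [/\ (forall (k : K) x y m, rho (k *: x + y) m = k *: rho x m + rho y m)
        /\ (forall x, lin (rho x)),
      (forall a d x m, x \in Dg a -> m \in DM d -> rho x m \in DM (a + d))
    & forall a b x y, x \in Dg a -> y \in Dg b ->
        forall m, rho (br x y) (beta m)
                  = rho (al x) (rho y m) - eps a b *: rho (al y) (rho x m)].

(* Homogeneous elements of degree c of the graded dual M^*:
   linear forms f with f(M_d) = 0 unless c + d = 0. *)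
Definition dual_hom (K : fieldType) (G : zmodType) (M : lmodType K)
    (DM : G -> pred M) (c : G) (f : M -> K) : Prop :=
  linform f /\ forall d m, m \in DM d -> c + d != 0 -> f m = 0.

Definition beta_tilde (K : fieldType) (M : lmodType K) (beta : M -> M)
    (f : M -> K) : M -> K := fun m => f (beta m).

(* rho~ (x)(f) = - eps(x, f) f o rho(x), for x of degree a and f of degree c *)
Definition rho_tilde (K : fieldType) (G : zmodType) (g M : lmodType K)
    (eps : G -> G -> K) (rho : g -> M -> M) (a c : G) (x : g) (f : M -> K)
    : M -> K := fun m => - (eps a c * f (rho x m)).

(* Main.v *)
Require Import Defs.
From HB Require Import structures.
From mathcomp Require Import all_boot all_order all_algebra.
From mathcomp Require Import boolp classical_sets ring.
Import GRing.Theory.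
Local Open Scope ring_scope.
Local Open Scope classical_set_scope.

Lemma exists_functional (K : fieldType) (M : lmodType K) (w : M) :
  w != 0 -> exists phi : M -> K, linform phi /\ phi w = 1.
Proof.
move=> w0.
pose Good (A : set (M * K)) :=
  [/\ (forall m k k', A (m,k) -> A (m,k') -> k = k'),
      (forall r m1 k1 m2 k2, A (m1,k1) -> A (m2,k2) -> A (r *: m1 + m2, r * k1 + k2))
    & A (w,1)].
pose P A := A = set0 \/ Good A.
have [|A [PA Amax]] := @Zorn_bigcup _ P.
  move=> F FP Ftot.
  have [[X FX Xn0]|noX] := pselect (exists2 X, F X & X != set0); last first.
    left; apply/seteqP; split => // -[m k] [X FX Xp].
    apply: noX; exists X => //; apply/set0P; by exists (m,k).
  have GX : forall Y, F Y -> Y != set0 -> Good Y.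
    by move=> Y FY Yn; case: (FP Y FY) => // Y0; rewrite Y0 eqxx in Yn.
  have GXn : forall Y p, F Y -> Y p -> Good Y.
    by move=> Y p FY Yp; apply: GX => //; apply/set0P; exists p.
  right; split.
  - move=> m k k' [X1 F1 X1p] [X2 F2 X2p].
    case: (Ftot _ _ F1 F2) => S.
    + by case: (GXn _ _ F2 X2p) => H _ _; apply: H (S _ X1p) X2p.
    + by case: (GXn _ _ F1 X1p) => H _ _; apply: H X1p (S _ X2p).
  - move=> r m1 k1 m2 k2 [X1 F1 X1p] [X2 F2 X2p].
    case: (Ftot _ _ F1 F2) => S.
    + by exists X2 => //; case: (GXn _ _ F2 X2p) => _ H _; apply: H (S _ X1p) X2p.
    + by exists X1 => //; case: (GXn _ _ F1 X1p) => _ H _; apply: H X1p (S _ X2p).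
  - by exists X => //; case: (GX _ FX Xn0).
have GA : Good A.
  case: PA => // A0; exfalso.
  apply: (Amax [set p | exists r, p = (r *: w, r)]); last first.
    right; split.
    - move=> m k k' [r [-> ->]] [r' [e ->]].
      by move/eqP: e; rewrite -subr_eq0 -scalerBl scaler_eq0 (negbTE w0) orbF subr_eq0 => /eqP.
    - move=> r m1 k1 m2 k2 [r1 [-> ->]] [r2 [-> ->]].
      by exists (r * r1 + r2); rewrite scalerDl scalerA.
    - by exists 1; rewrite scale1r.
  rewrite A0; split => //; move=> /(_ (0 *: w, 0)) H.
  by have := H (ex_intro _ 0 erefl).
case: GA => Afun Acl Aw.
have A00 : A (0, 0).
  by have := Acl (-1) _ _ _ _ Aw Aw; rewrite scaleN1r addNr mulN1r addNr.
have Atot : forall u, exists k, A (u, k).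
  move=> u; have [//|nu] := pselect (exists k, A (u,k)); exfalso; apply: (Amax [set p | exists a k r, A (a,k) /\ p = (a + r *: u, k)]).
    split.
      by move=> [m k] Ap; exists m, k, 0; rewrite scale0r addr0.
    move=> /(_ (0 + 1 *: u, 0)) H; apply: nu; exists 0.
    by have := H (ex_intro _ 0 (ex_intro _ 0 (ex_intro _ 1 (conj A00 erefl)))); rewrite add0r scale1r.
  right; split.
  - move=> m k k' [a [k1 [r [Ha [-> ->]]]]] [a' [k2 [r' [Ha' [e ->]]]]].
    have [rr|rr] := eqVneq r r'.
      by move: e; rewrite rr => /addIr e; apply: Afun Ha _; rewrite e.
    exfalso; apply: nu.
    have Hd := Acl (-1) _ _ _ _ Ha Ha'.
    exists ((r - r')^-1 * (-1 * k1 + k2)).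
    have -> : u = (r - r')^-1 *: (-1 *: a + a') + 0.
      rewrite addr0 scaleN1r (addrC (-a)).
      have -> : a' - a = (r - r') *: u.
        have -> : a' = a + r *: u - r' *: u by rewrite e addrK.
        rewrite scalerBl -(addrA a).
        by rewrite addrAC subrr add0r.
      by rewrite scalerA mulVf ?scale1r // subr_eq0.
    by rewrite -[X in A (_, X)]addr0; apply: Acl.
  - move=> s m1 k1 m2 k2 [a [kk [r [Ha [-> ->]]]]] [a' [kk' [r' [Ha' [-> ->]]]]].
    exists (s *: a + a'), (s * kk + kk'), (s * r + r'); split; first exact: Acl.
    by rewrite scalerDr scalerDl scalerA; congr (_, _); rewrite !addrA; congr (_ + _); rewrite addrAC.
  - by exists w, 1, 0; rewrite scale0r addr0.
pose phi u := proj1_sig (cid (Atot u)).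
have Hphi u : A (u, phi u) by rewrite /phi; case: cid.
exists phi; split.
  by move=> k u v; apply: Afun (Hphi _) (Acl _ _ _ _ _ (Hphi u) (Hphi v)).
exact: Afun (Hphi w) Aw.
Qed.
Lemma sum_ind (G : eqType) (M : zmodType) (s u : seq G) (c : G -> M) :
  uniq s -> uniq u -> {subset s <= u} ->
  \sum_(g <- u) (if g \in s then c g else 0) = \sum_(g <- s) c g.
Proof.
move=> us uu su; rewrite -big_mkcond -big_filter; apply: perm_big.
apply: uniq_perm; first exact: filter_uniq.
  exact: us.
by move=> x; rewrite mem_filter; case xs: (x \in s) => //=; rewrite su.
Qed.

Lemma decomp_unique (K : fieldType) (G : zmodType) (M : lmodType K)
  (D : G -> pred M) : graded D ->
  forall s c t e, uniq s -> uniq t -> (forall g, c g \in D g) -> (forall g, e g \in D g) ->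
  \sum_(g <- s) c g = \sum_(g <- t) e g ->
  forall g, (if g \in s then c g else 0) = (if g \in t then e g else 0).
Proof.
case=> D0 Dcl _ Ddir s c t e us ut Dc De Hsum g.
pose u := undup (s ++ t).
pose h g := (if g \in s then c g else 0) - (if g \in t then e g else 0).
have Dh g' : h g' \in D g'.
  rewrite /h addrC -scaleN1r; apply: Dcl; case: ifP => _ //.
have uu : uniq u by apply: undup_uniq.
have su : {subset s <= u} by move=> x xs; rewrite mem_undup mem_cat xs.
have tu : {subset t <= u} by move=> x xs; rewrite mem_undup mem_cat xs orbT.
have Hs : \sum_(g <- u) h g = 0.
  by rewrite /h big_split /= sumrN !sum_ind // Hsum subrr.
have [gu|gu] := boolP (g \in u).
  by apply/eqP; rewrite -subr_eq0; apply/eqP; apply: (Ddir u h uu Dh Hs).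
move: gu; rewrite mem_undup mem_cat negb_or => /andP[/negbTE -> /negbTE ->] //.
Qed.

Lemma exists_proj (K : fieldType) (G : zmodType) (M : lmodType K)
  (D : G -> pred M) : graded D -> forall d : G,
  exists pi : M -> M, lin pi /\ (forall s c, uniq s -> (forall g, c g \in D g) ->
     pi (\sum_(g <- s) c g) = if d \in s then c d else 0).
Proof.
move=> HD d; have HD' := HD; case: HD' => D0 Dcl Dex Ddir.
have [F HF] : exists F : M -> seq G * (G -> M), forall m,
    uniq (F m).1 /\ (forall g, (F m).2 g \in D g) /\ m = \sum_(g <- (F m).1) (F m).2 g.
  have [|F' HF'] := (choice (P := fun m p => uniq p.1 /\ (forall g, p.2 g \in D g) /\ m = \sum_(g <- p.1) p.2 g)).
    by move=> m; have [s [c H]] := Dex m; exists (s, c).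
  by exists F'.
pose pi m := if d \in (F m).1 then (F m).2 d else 0.
have Hpi : forall s c, uniq s -> (forall g, c g \in D g) ->
     pi (\sum_(g <- s) c g) = if d \in s then c d else 0.
  move=> s c us Dc; rewrite /pi.
  have [u1 [D1 e1]] := HF (\sum_(g <- s) c g).
  exact: (@decomp_unique _ _ _ _ HD _ _ _ _ u1 us D1 Dc (esym e1) d).
exists pi; split => // k u v.
have [uu [Du eu]] := HF u; have [uv [Dv ev]] := HF v.
set su := (F u).1 in uu Du eu *; set cu := (F u).2 in uu Du eu *.
set sv := (F v).1 in uv Dv ev *; set cv := (F v).2 in uv Dv ev *.
pose t := undup (su ++ sv).
pose h g := k *: (if g \in su then cu g else 0) + (if g \in sv then cv g else 0).
have ut : uniq t by apply: undup_uniq.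
have sut : {subset su <= t} by move=> x xs; rewrite mem_undup mem_cat xs.
have svt : {subset sv <= t} by move=> x xs; rewrite mem_undup mem_cat xs orbT.
have Dh g : h g \in D g by rewrite /h; apply: Dcl; case: ifP.
have -> : k *: u + v = \sum_(g <- t) h g.
  by rewrite /h big_split /= -scaler_sumr !sum_ind // -eu -ev.
have pu : pi u = if d \in su then cu d else 0.
  by rewrite {1}eu Hpi.
have pv : pi v = if d \in sv then cv d else 0.
  by rewrite {1}ev Hpi.
rewrite Hpi // pu pv /h.
case: ifP => //; rewrite mem_undup mem_cat => /negbT; rewrite negb_or => /andP[/negbTE -> /negbTE ->].
by rewrite scaler0 addr0.
Qed.

Lemma dbl0 (V : zmodType) (x : V) : x = x + x -> x = 0.
Proof. by move=> e; rewrite -(addrK x x) -e subrr. Qed.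

Lemma lf0 (K : fieldType) (M : lmodType K) (f : M -> K) : linform f -> f 0 = 0.
Proof. by move=> lf; apply: dbl0; have := lf 1 0 0; rewrite scale1r addr0 mul1r. Qed.

Lemma lf_comb (K : fieldType) (M : lmodType K) (f : M -> K) : linform f ->
  forall u v w (k : K), f (u - k *: v - w) = f u - k * f v - f w.
Proof.
move=> lf u v w k; rewrite /linform in lf.
have f0 : f 0 = 0.
  by apply: dbl0; have := lf 1 0 0; rewrite scale1r addr0 mul1r.
have fD x y : f (x + y) = f x + f y by rewrite -{1}(scale1r x) lf mul1r.
have fZ (r : K) x : f (r *: x) = r * f x by rewrite -(addr0 (r *: x)) lf f0 addr0.
have fN x : f (- x) = - f x by rewrite -scaleN1r fZ mulN1r.
by rewrite !fD !fN fZ.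
Qed.

Lemma alg_key (K : fieldType) (E1 E2 Eab Eba F1 F2 F3 : K) : Eab * Eba = 1 ->
 (-(E1*E2*F3) = -(Eab*E1 * -(E2*F2)) - Eab * -(Eba*E2 * -(E1*F1))) <->
 E1*E2*(F1 - Eab*F2 - F3) = 0.
Proof.
move=> h.
have -> : -(Eab*E1 * -(E2*F2)) - Eab * -(Eba*E2 * -(E1*F1)) =
          -(Eab*E1 * -(E2*F2)) - (Eab * Eba) * (E1*E2*F1) by ring.
rewrite h mul1r.
have -> : -(Eab*E1 * -(E2*F2)) - E1*E2*F1 = -(E1*E2*F3) - E1*E2*(F1 - Eab*F2 - F3) by ring.
split.
  move=> e.
  transitivity (-(E1*E2*F3) - (-(E1*E2*F3) - E1*E2*(F1 - Eab*F2 - F3))); first by ring.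
  by rewrite -e subrr.
by move=> ->; rewrite subr0.
Qed.

Theorem mainTheorem7 (K : fieldType) (G : zmodType) (g M : lmodType K)
    (Dg : G -> pred g) (br : g -> g -> g) (al : g -> g) (eps : G -> G -> K)
    (DM : G -> pred M) (beta : M -> M) (rho : g -> M -> M)
    (charK0 : [pchar K] =i pred0)
    (Hg : color_hom_lie Dg br al eps)
    (HM : graded DM) (Hbeta : even_map DM DM beta)
    (Hrho : is_representation Dg br al eps DM beta rho) :
  (forall a b c x y f, x \in Dg a -> y \in Dg b -> dual_hom DM c f ->
     forall m : M,
       rho_tilde eps rho (a + b) c (br x y) (beta_tilde beta f) m
       = rho_tilde eps rho a (b + c) (al x) (rho_tilde eps rho b c y f) m
         - eps a b * rho_tilde eps rho b (a + c) (al y) (rho_tilde eps rho a c x f) m)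
  <->
  (forall a b x y, x \in Dg a -> y \in Dg b ->
     forall m : M,
       rho x (rho (al y) m) - eps a b *: rho y (rho (al x) m) = beta (rho (br x y) m)).
Proof.
case: Hg => [[_ [epsnz epsinv epsD2 epsD1]] _ _ _ _].
split.
- move=> H a b x y Hx Hy m; apply/eqP; rewrite -subr_eq0; apply/eqP.
  set v := _ - _ - _.
  have [s [c [us [Dc ev]]]] := (let: And4 _ _ Dex _ := HM in Dex) v.
  case: (pselect (exists d, d \in s /\ c d != 0)) => [[d [ds cd]]|nod]; last first.
    rewrite ev; apply: big1_seq => gg /andP[_ gs]; apply/eqP; apply: contraT => cn.
    by exfalso; apply: nod; exists gg.
  have [pi [lpi Hpi]] := @exists_proj _ _ _ _ HM d.
  have [phi [lphi phiw]] := @exists_functional _ _ _ cd.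
  rewrite /lin in lpi; rewrite /linform in lphi.
  pose f m := phi (pi m).
  have lf : linform f by move=> k u w; rewrite /f lpi lphi.
  have pi0 : pi 0 = 0.
    by apply: dbl0; have := lpi 1 0 0; rewrite !scale1r addr0.
  have phi0 : phi 0 = 0.
    by apply: dbl0; have := lphi 1 0 0; rewrite scale1r addr0 mul1r.
  have Hf : dual_hom DM (- d) f.
    split => // e n ne de.
    have -> : n = \sum_(gg <- [:: e]) (fun gg => if gg == e then n else 0) gg.
      by rewrite big_seq1 eqxx.
    rewrite /f Hpi //; last first.
      have D0 : forall gg, 0 \in DM gg by case: HM.
      by move=> gg; case: eqP => [->|_].
    rewrite inE; case: eqP => [ed|_]; last by rewrite phi0.
    by move: de; rewrite ed addNr eqxx.
  have fv : f v = 1 by rewrite /f {1}ev Hpi // ds.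
  have := H a b (- d) x y f Hx Hy Hf m.
  rewrite /rho_tilde /beta_tilde epsD1 epsD2 [eps b (a + _)]epsD2.
  move/(alg_key _ _ _ _ _ _ _ _ (epsinv a b)).
  rewrite -lf_comb // -/v fv mulr1 => /eqP; rewrite mulf_eq0 !(negbTE (epsnz _ _)) //.
- move=> H a b c x y f Hx Hy [lf _] m.
  rewrite /rho_tilde /beta_tilde epsD1 epsD2 [eps b (a + _)]epsD2.
  apply/(alg_key _ _ _ _ _ _ _ _ (epsinv a b)).
  by rewrite -lf_comb // (H a b x y Hx Hy) subrr lf0 // mulr0.
Qed.
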